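(* Let $X_1,\ldots,X_{N_1+N_2}\in\mathbb{R}^D$ with $N_1,N_2\ge1$, viewed as two segments $\{X_n:n=1,\ldots,N_1\}$ and $\{X_n:n=N_1+1,\ldots,N_1+N_2\}$. For $0<t<N_1$, consider shifting the change point from $N_1$ to $N_1-t$, so that the segments become $\{X_n:n=1,\ldots,N_1-t\}$ and $\{X_n:n=N_1-t+1,\ldots,N_1+N_2\}$. Then the within-segment quadratic loss (sum of the quadratic losses of the two segments) is reduced by this operation if and only if $$\frac{N_1\,|\bar X_{0,N_1}-\bar X_{N_1-t,N_1}|^2}{N_1-t}>\frac{N_2\,|\bar X_{N_1,N_1+N_2}-\bar X_{N_1-t,N_1}|^2}{N_2+t},$$ where $\bar X_{n_1,n_2}$ denotes the sample mean of $\{X_n:n=n_1+1,\ldots,n_2\}$.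
   Context: Quadratic loss of a segment $x_a,\ldots,x_b\in\mathbb{R}^D$: $\sum_{n=a}^b|x_n-\bar x|^2$, where $\bar x$ is the sample mean of the segment and $|\cdot|$ is the Euclidean norm. *)

(* Defs.v *)
From mathcomp Require Import all_boot all_order all_algebra.
Set Implicit Arguments. Unset Strict Implicit. Unset Printing Implicit Defensive.
Import Order.TTheory GRing.Theory Num.Theory.
Local Open Scope ring_scope.

Definition sqnorm (R : realFieldType) (D : nat) (v : 'rV[R]_D) : R :=
  \sum_(i < D) v ord0 i ^+ 2.

Definition seg_mean (R : realFieldType) (D : nat) (X : nat -> 'rV[R]_D)
  (n1 n2 : nat) : 'rV[R]_D :=
  (n2 - n1)%:R^-1 *: \sum_(n1.+1 <= n < n2.+1) X n.

Definition seg_loss (R : realFieldType) (D : nat) (X : nat -> 'rV[R]_D)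
  (n1 n2 : nat) : R :=
  \sum_(n1.+1 <= n < n2.+1) sqnorm (X n - seg_mean X n1 n2).

(* Main.v *)
Require Import Defs.
From mathcomp Require Import all_boot all_order all_algebra.
From mathcomp Require Import ring lra zify.
Import Order.TTheory GRing.Theory Num.Theory.
Local Open Scope ring_scope.
Section S.
Variables (R : realFieldType) (D : nat) (X : nat -> 'rV[R]_D).

Definition Sx (i : 'I_D) n1 n2 := \sum_(n1.+1 <= n < n2.+1) X n ord0 i.
Definition Qx (i : 'I_D) n1 n2 := \sum_(n1.+1 <= n < n2.+1) X n ord0 i ^+ 2.

Lemma mean_coord n1 n2 i : seg_mean X n1 n2 ord0 i = Sx i n1 n2 / (n2 - n1)%:R.
Proof. by rewrite /seg_mean !mxE summxE mulrC. Qed.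

Lemma loss_coord n1 n2 : (n1 < n2)%N ->
  seg_loss X n1 n2 = \sum_i (Qx i n1 n2 - Sx i n1 n2 ^+ 2 / (n2 - n1)%:R).
Proof.
move=> h; rewrite /seg_loss /sqnorm exchange_big /=; apply: eq_bigr => i _.
have k0 : (n2 - n1)%:R != 0 :> R by rewrite pnatr_eq0 subn_eq0 -ltnNge.
under eq_bigr => n _ do rewrite mxE [X in _ + X]mxE mean_coord.
set m := Sx i n1 n2 / _.
have e : forall n, (X n ord0 i - m)^+2 = X n ord0 i ^+ 2 - ((2 * m) * X n ord0 i - m ^+ 2)
  by move=> n; ring.
under eq_bigr => n _ do rewrite e.
rewrite !sumrB -mulr_sumr sumr_const_nat subSS /m /Qx -/(Sx i n1 n2).
rewrite /Sx; set s := \sum_(_ <= _ < _) _.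
set S := \sum_(_ <= _ < _) _.
rewrite -(mulr_natr ((S / _) ^+ 2)).
by field.
Qed.

Lemma split_S i a b c : (a <= b)%N -> (b <= c)%N -> Sx i a c = Sx i a b + Sx i b c.
Proof. by move=> h1 h2; rewrite /Sx -big_cat_nat. Qed.
Lemma split_Q i a b c : (a <= b)%N -> (b <= c)%N -> Qx i a c = Qx i a b + Qx i b c.
Proof. by move=> h1 h2; rewrite /Qx -big_cat_nat. Qed.

Lemma sqnorm_coord a b c d : sqnorm (seg_mean X a b - seg_mean X c d) =
  \sum_i (Sx i a b / (b - a)%:R - Sx i c d / (d - c)%:R) ^+ 2.
Proof. by apply: eq_bigr => i _; rewrite mxE [X in _ + X]mxE !mean_coord. Qed.
End S.
Lemma sum_comb (R : realFieldType) (D : nat) (F G H K U V : 'I_D -> R) c1 c2 d1 d2 k :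
  (forall i, F i + G i - (H i + K i) = k * (c1 * U i / d1 - c2 * V i / d2)) ->
  (\sum_i F i) + (\sum_i G i) - ((\sum_i H i) + (\sum_i K i))
  = k * (c1 * (\sum_i U i) / d1 - c2 * (\sum_i V i) / d2).
Proof.
move=> e.
have -> : c1 * (\sum_i U i) / d1 = \sum_i (c1 * U i / d1) by rewrite mulr_sumr mulr_suml.
have -> : c2 * (\sum_i V i) / d2 = \sum_i (c2 * V i / d2) by rewrite mulr_sumr mulr_suml.
rewrite -sumrB mulr_sumr -(eq_bigr _ (fun i _ => e i)) sumrB !big_split //.
Qed.
Theorem proposition1 (R : realFieldType) (D : nat) (X : nat -> 'rV[R]_D)
  (N1 N2 t : nat) (hN1 : (1 <= N1)%N) (hN2 : (1 <= N2)%N)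
  (ht0 : (0 < t)%N) (ht : (t < N1)%N) :
  (seg_loss X 0 (N1 - t) + seg_loss X (N1 - t) (N1 + N2)
     < seg_loss X 0 N1 + seg_loss X N1 (N1 + N2))
  <->
  (N2%:R * sqnorm (seg_mean X N1 (N1 + N2) - seg_mean X (N1 - t) N1)
     / (N2 + t)%:R
   < N1%:R * sqnorm (seg_mean X 0 N1 - seg_mean X (N1 - t) N1)
     / (N1 - t)%:R).
Proof.
have [a Ea] : exists a, N1 = (a + t)%N by exists (N1 - t)%N; rewrite subnK // ltnW.
subst N1.
have a0 : (0 < a)%N by lia.
rewrite addnK.
have h1 : (a < a + t + N2)%N by lia.
have h2 : (0 < a + t)%N by lia.
have h3 : (a + t < a + t + N2)%N by lia.
rewrite (@loss_coord _ _ X _ _ a0) (@loss_coord _ _ X _ _ h1) (@loss_coord _ _ X _ _ h2) (@loss_coord _ _ X _ _ h3).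
rewrite !sqnorm_coord !subn0 addKn (addKn a) -(addnA a) (addKn a).
set Old := _ + _; set New := _ + _.
set Lf := _ / _; set Rr := _ / _.

suff E : New - Old = t%:R * (Rr - Lf).
  rewrite -[Old < New]subr_gt0 -[Lf < Rr]subr_gt0 E; split => h.
  - by rewrite -(pmulr_rgt0 _ (_ : 0 < t%:R)) // ltr0n.
  - by rewrite pmulr_rgt0 // ltr0n.
rewrite /Old /New /Lf /Rr.
apply: sum_comb => i.
have l1 : (a <= a + t)%N by lia.
have l2 : (a + t <= a + (t + N2))%N by lia.
rewrite (@split_S _ _ X i _ _ _ l1 l2) (@split_Q _ _ X i _ _ _ l1 l2).
rewrite (@split_S _ _ X i _ _ _ (leq0n a) l1) (@split_Q _ _ X i _ _ _ (leq0n a) l1).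
have ha : a%:R != 0 :> R by rewrite pnatr_eq0 -lt0n.
have ht' : t%:R != 0 :> R by rewrite pnatr_eq0 -lt0n.
have hn : N2%:R != 0 :> R by rewrite pnatr_eq0 -lt0n.
have hat : (a + t)%:R != 0 :> R by rewrite pnatr_eq0 -lt0n; lia.
have htn : (t + N2)%:R != 0 :> R by rewrite pnatr_eq0 -lt0n; lia.
have hnt : (N2 + t)%:R != 0 :> R by rewrite pnatr_eq0 -lt0n; lia.
rewrite !natrD in hat htn hnt *.
field; by rewrite hnt ht' hn ha hat.
Qed.
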